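(* Let $t\in T_2$, let $\mathcal{T}_t$ be the variety defined by $t(x,y)=x$, let $A=X\mathcal{T}_t^{\,p}$ be the free $\mathcal{T}_t^{\,p}$-algebra over a set $X$, let $\varrho$ be the semilattice replica congruence of $A$, and let $\theta$ be any congruence of $A$. Then $\theta\vee\varrho=\theta\circ\varrho\circ\theta$.
   Context: $\Omega$-algebras are of a plural similarity type (no nullary operation symbols, at least one operation symbol of arity $\ge2$). $T_n$ is the set of $\Omega$-terms in $x_1,\dots,x_n$ in which all $n$ variables occur. An identity is regular if the same variables occur on both sides. $\mathcal{S}$ is the variety of $\Omega$-algebras satisfying all regular identities; the semilattice replica congruence $\varrho$ of $A$ is the smallest congruence with $A/\varrho\in\mathcal{S}$. $\circ$ denotes relational composition of congruences and $\vee$ their join. Prolongation: for an identity $\sigma$ of the form $u(y_1,\dots,y_n)=v(y_1,\dots,y_n)$ and $m\ge1$, $\sigma^p_m$ is the set of identities $u(r_1,\dots,r_n)=v(r_1,\dots,r_n)$ obtained by substituting $r_i(x_1,\dots,x_m)$ for $y_i$, with $r_i$ ranging over $T_m$; $\sigma^p=\bigcup_m\sigma^p_m$; $\Sigma^p=\bigcup_{\sigma\in\Sigma}\sigma^p$. $\mathcal{V}^p$ is the variety defined by $\mathrm{Id}(\mathcal{V})^p$, $\mathrm{Id}(\mathcal{V})$ being all identities of $\mathcal{V}$. *)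

(* Defs.v *)
From mathcomp Require Import all_boot.
Set Implicit Arguments. Unset Strict Implicit. Unset Printing Implicit Defensive.

Section UA.
Variables (Om : Type) (ar : Om -> nat).

Definition plural : Prop := (forall o, 0 < ar o) /\ (exists o, 1 < ar o).

Inductive term (V : Type) : Type :=
| Var : V -> term V
| Op : forall o : Om, ('I_(ar o) -> term V) -> term V.

Record algebra : Type := Algebra {
  carrier :> Type;
  op : forall o : Om, ('I_(ar o) -> carrier) -> carrier }.

Fixpoint eval (A : algebra) (V : Type) (e : V -> A) (u : term V) : A :=
  match u with
  | Var x => e x
  | Op o f => @op A o (fun i => eval e (f i))
  end.

Fixpoint subst (V W : Type) (s : V -> term W) (u : term V) : term W :=
  match u with
  | Var x => s x
  | Op o f => @Op W o (fun i => subst s (f i))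
  end.

Fixpoint occurs (V : Type) (x : V) (u : term V) : Prop :=
  match u with
  | Var y => x = y
  | Op o f => exists i, occurs x (f i)
  end.

Definition identity : Type := (term nat * term nat)%type.

Definition satisfies (A : algebra) (s : identity) : Prop :=
  forall e : nat -> A, eval e s.1 = eval e s.2.

Definition model (Sigma : identity -> Prop) (A : algebra) : Prop :=
  forall s, Sigma s -> satisfies A s.

Definition Id (Sigma : identity -> Prop) : identity -> Prop :=
  fun s => forall A : algebra, model Sigma A -> satisfies A s.

Definition in_T (m : nat) (u : term nat) : Prop :=
  (forall x, occurs x u -> x < m) /\ (forall x, x < m -> occurs x u).

Definition prolong (Sigma : identity -> Prop) : identity -> Prop :=
  fun s' => exists s, Sigma s /\
    exists m, 0 < m /\ exists r : nat -> term nat,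
      (forall i, in_T m (r i)) /\ s' = (subst r s.1, subst r s.2).

Definition regular (s : identity) : Prop :=
  forall x, occurs x s.1 <-> occurs x s.2.

Definition subrel (A : Type) (R S : A -> A -> Prop) : Prop :=
  forall x y, R x y -> S x y.

Definition congruence (A : algebra) (th : A -> A -> Prop) : Prop :=
  (forall x, th x x) /\ (forall x y, th x y -> th y x) /\
  (forall x y z, th x y -> th y z -> th x z) /\
  (forall o (a b : 'I_(ar o) -> A), (forall i, th (a i) (b i)) ->
     th (@op A o a) (@op A o b)).

(* A/th satisfies the identity s *)
Definition quot_satisfies (A : algebra) (th : A -> A -> Prop) (s : identity) :=
  forall e : nat -> A, th (eval e s.1) (eval e s.2).

Definition quot_in_S (A : algebra) (th : A -> A -> Prop) : Prop :=
  forall s, regular s -> quot_satisfies th s.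

Definition semilattice_replica (A : algebra) (rho : A -> A -> Prop) : Prop :=
  congruence rho /\ quot_in_S rho /\
  (forall phi, congruence phi -> quot_in_S phi -> subrel rho phi).

Definition cong_join (A : algebra) (th rho : A -> A -> Prop) : A -> A -> Prop :=
  fun x y => forall phi, congruence phi -> subrel th phi -> subrel rho phi ->
    phi x y.

Definition rel_comp (A : Type) (R S : A -> A -> Prop) : A -> A -> Prop :=
  fun x y => exists z, R x z /\ S z y.

Definition hom (A B : algebra) (h : A -> B) : Prop :=
  forall o (a : 'I_(ar o) -> A), h (@op A o a) = @op B o (fun i => h (a i)).

Definition free_over (Sigma : identity -> Prop) (X : Type) (A : algebra)
    (eta : X -> A) : Prop :=
  model Sigma A /\
  forall B : algebra, model Sigma B -> forall f : X -> B,
    exists h : A -> B, hom h /\ (forall x, h (eta x) = f x) /\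
      (forall h' : A -> B, hom h' -> (forall x, h' (eta x) = f x) ->
         forall a, h' a = h a).

End UA.

(* Main.v *)
Require Import Defs.
From HB Require Import structures.
From mathcomp Require Import all_boot.
From Stdlib Require Import FunctionalExtensionality PropExtensionality ClassicalEpsilon.
Set Implicit Arguments. Unset Strict Implicit.

Lemma eval_subst Om (ar : Om -> nat) (A : algebra ar) V W (e : W -> A)
  (r : V -> term ar W) u :
  eval e (subst r u) = eval (fun y => eval e (r y)) u.
Proof.
elim: u => [v|o f IH] //=; congr op; apply: functional_extensionality => i; exact: IH.
Qed.

Lemma eval_hom Om (ar : Om -> nat) (A B : algebra ar) (h : A -> B) V (e : V -> A) u :
  hom h -> h (eval e u) = eval (fun y => h (e y)) u.
Proof.
move=> Hh; elim: u => [v|o f IH] //=; rewrite Hh; congr op.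
apply: functional_extensionality => i; exact: IH.
Qed.

Lemma eval_ext Om (ar : Om -> nat) (A : algebra ar) V (e e' : V -> A) u :
  (forall x, occurs x u -> e x = e' x) -> eval e u = eval e' u.
Proof.
elim: u => [v|o f IH] /= H; first exact: H.
congr op; apply: functional_extensionality => i; apply: IH => x Hx; apply: H; by exists i.
Qed.

Lemma eval_cong Om (ar : Om -> nat) (A : algebra ar) (th : A -> A -> Prop) V
  (e e' : V -> A) u :
  congruence th -> (forall x, th (e x) (e' x)) -> th (eval e u) (eval e' u).
Proof.
move=> [_ [_ [_ Hc]]] H; elim: u => [v|o f IH] //=; exact: Hc.
Qed.

Lemma occurs_subst Om (ar : Om -> nat) V W (r : V -> term ar W) u z :
  occurs z (subst r u) <-> exists y, occurs y u /\ occurs z (r y).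
Proof.
elim: u => [v|o f IH] /=.
  split; [move=> H; by exists v | by move=> [y [-> H]]].
split.
  move=> [i /IH [y [Hy Hz]]]; exists y; split=> //; by exists i.
move=> [y [[i Hi] Hz]]; exists i; apply/IH; by exists y.
Qed.

Lemma has_var Om (ar : Om -> nat) (Hpl : plural ar) V (u : term ar V) :
  exists x, occurs x u.
Proof.
elim: u => [v|o f IH] /=; first by exists v.
have [x Hx] := IH (Ordinal (Hpl.1 o)); exists x; by exists (Ordinal (Hpl.1 o)).
Qed.

Definition setA Om (ar : Om -> nat) (X : Type) : algebra ar :=
  @Algebra _ ar (X -> Prop) (fun o f x => exists i, f i x).

Lemma eval_setA Om (ar : Om -> nat) (X : Type) V (e : V -> setA ar X) u :
  eval e u = (fun x => exists y, occurs y u /\ e y x).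
Proof.
apply: functional_extensionality => x; apply: propositional_extensionality.
elim: u => [v|o f IH] /=.
  split; [move=> H; by exists v | by move=> [y [-> H]]].
split.
  move=> [i /IH [y [Hy Hz]]]; exists y; split=> //; by exists i.
move=> [y [[i Hi] Hz]]; exists i; apply/IH; by exists y.
Qed.
Lemma setA_model Om (ar : Om -> nat) (Hpl : plural ar) X Sigma :
  model (prolong Sigma) (setA ar X).
Proof.
move=> s' [s [_ [m [m0 [r [Hr ->]]]]]] e /=.
have key : forall u : term ar nat, eval e (subst r u) = (fun x => exists z, z < m /\ e z x).
  move=> u; rewrite eval_subst eval_setA.
  apply: functional_extensionality => x; apply: propositional_extensionality.
  have [y0 Hy0] := has_var Hpl u.
  split.
    move=> [y [_]]; rewrite eval_setA => -[z [Hz Hex]]; exists z; split=> //.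
    exact: (Hr y).1.
  move=> [z [Hz Hex]]; exists y0; split=> //; rewrite eval_setA; exists z; split=> //.
  exact: (Hr y0).2.
by rewrite !key.
Qed.

Definition Pgen Om (ar : Om -> nat) X (A : algebra ar) (eta : X -> A) (a : A) :=
  exists u : term ar X, a = eval eta u.

Definition subop Om (ar : Om -> nat) X (A : algebra ar) (eta : X -> A) o
  (f : 'I_(ar o) -> {a : A | Pgen eta a}) : {a : A | Pgen eta a}.
Proof.
exists (op (fun i => sval (f i))).
exists (Op (fun i => proj1_sig (constructive_indefinite_description _ (proj2_sig (f i))))).
rewrite /=; congr op; apply: functional_extensionality => i.
by case: (constructive_indefinite_description _ _).
Defined.

Definition subA Om (ar : Om -> nat) X (A : algebra ar) (eta : X -> A) : algebra ar :=
  @Algebra _ ar {a : A | Pgen eta a} (@subop _ ar X A eta).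

Lemma eval_subA Om (ar : Om -> nat) X (A : algebra ar) (eta : X -> A) V
  (e : V -> subA eta) u : sval (eval e u) = eval (fun y => sval (e y)) u.
Proof.
elim: u => [v|o f IH] //=; congr op; apply: functional_extensionality => i; exact: IH.
Qed.

Lemma generation Om (ar : Om -> nat) Sigma X (A : algebra ar) (eta : X -> A) :
  free_over Sigma eta -> forall a : A, exists u : term ar X, a = eval eta u.
Proof.
move=> [HM HF].
have HB : model Sigma (subA eta).
  move=> s Hs e; apply: eq_sig_hprop.
    move=> a p q; exact: proof_irrelevance.
  by rewrite !eval_subA; apply: HM.
have [h [hh [heta _]]] := HF _ HB (fun x => exist _ (eta x) (ex_intro _ (Var ar x) erefl)).
have [g [hg [geta guniq]]] := HF _ HM eta.
have E1 : forall a, sval (h a) = g a.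
  apply: guniq; last by move=> x; rewrite heta.
  by move=> o a; rewrite hh.
have E2 : forall a, a = g a by apply: guniq.
move=> a; rewrite (E2 a) -(E1 a); exact: (proj2_sig (h a)).
Qed.
Definition cX (X : Type) : Type := X.
Definition ceq (X : Type) (x y : cX X) : bool :=
  if excluded_middle_informative (x = y) then true else false.
Lemma ceqP (X : Type) : Equality.axiom (@ceq X).
Proof. move=> x y; rewrite /ceq; case: excluded_middle_informative => H; by constructor. Qed.
HB.instance Definition _ (X : Type) := hasDecEq.Build (cX X) (@ceqP X).

Fixpoint vars Om (ar : Om -> nat) X (u : term ar X) : seq (cX X) :=
  match u with
  | Var x => [:: (x : cX X)]
  | Op o f => flatten [seq vars (f i) | i <- enum 'I_(ar o)]
  end.

Lemma occ_vars Om (ar : Om -> nat) X (u : term ar X) (x : cX X) :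
  occurs x u <-> x \in vars u.
Proof.
elim: u => [v|o f IH] /=.
  rewrite inE; split; [by move=> -> | by move/eqP].
split.
  move=> [i /IH Hi]; apply/flattenP; exists (vars (f i)) => //.
  apply/mapP; exists i => //; by rewrite mem_enum.
move/flattenP => [s /mapP [i _ ->] /IH Hi]; by exists i.
Qed.

Lemma absorb Om (ar : Om -> nat) (Hpl : plural ar) (t : term ar nat)
  X (A : algebra ar) (eta : X -> A)
  (HM : model (prolong (Id (fun s => s = (t, Var ar 0)))) A) (u v : term ar X)
  (Huv : forall x, occurs x u <-> occurs x v) :
  eval (fun n => if n is 0 then eval eta u else eval eta v) t = eval eta u.
Proof.
have [x0 Hx0] := has_var Hpl u.
set l := undup (vars u).
set m := size l.
have Hl : forall x : cX X, occurs x u <-> x \in l.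
  by move=> x; rewrite mem_undup; apply: occ_vars.
pose ren := fun x : X => Var ar (index (x : cX X) l).
pose e := fun n => eta (nth (x0 : cX X) l n).
have inT : forall w : term ar X, (forall x, occurs x u <-> occurs x w) ->
    in_T m (subst ren w).
  move=> w Hw; split.
    move=> n /occurs_subst [y [Hy ->]]; rewrite /m index_mem; apply/Hl/Hw/Hy.
  move=> n Hn; apply/occurs_subst; exists (nth (x0 : cX X) l n); split.
    apply/Hw/Hl; exact: mem_nth.
  by rewrite /= index_uniq // undup_uniq.
have evT : forall w : term ar X, (forall x, occurs x u <-> occurs x w) ->
    eval e (subst ren w) = eval eta w.
  move=> w Hw; rewrite eval_subst; apply: eval_ext => x /Hw /Hl Hx.
  by rewrite /= /e nth_index.
pose r := fun n => if n is 0 then subst ren u else subst ren v.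
have Hs : prolong (Id (fun s => s = (t, Var ar 0))) (subst r t, subst r (Var ar 0)).
  exists (t, Var ar 0); split.
    move=> B HB; exact: HB.
  exists m; split.
    by rewrite /m -has_predT; apply/hasP; exists (x0 : cX X) => //; apply/Hl.
  exists r; split=> //.
  case=> [|n] /=; apply: inT => //.
have H := HM _ Hs e; rewrite /= eval_subst in H.
have Hu : forall x, occurs x u <-> occurs x u by move=> x; split.
transitivity (eval (fun y => eval e (r y)) t).
  congr eval; apply: functional_extensionality => -[|n] /=; by rewrite evT.
by rewrite H /r evT.
Qed.
Theorem lemma4p4 (Om : Type) (ar : Om -> nat) (Hpl : plural ar)
  (t : term ar nat) (Ht : in_T 2 t)
  (X : Type) (A : algebra ar) (eta : X -> A)
  (HA : @free_over Om ar (prolong (Id (fun s => s = (t, @Var Om ar nat 0)))) X A eta)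
  (rho : A -> A -> Prop) (Hrho : semilattice_replica rho)
  (theta : A -> A -> Prop) (Htheta : congruence theta) :
  forall x y : A,
    cong_join theta rho x y <-> rel_comp theta (rel_comp rho theta) x y.
Proof.
have [Crho [Srho Mrho]] := Hrho.
have [th_r [th_s [th_t th_c]]] := Htheta.
have [rh_r [rh_s [rh_t rh_c]]] := Crho.
pose T := fun a b : A => eval (fun n => if n is 0 then a else b) t.
have [c [hc [ceta _]]] := HA.2 _ (@setA_model Om ar Hpl X _) (fun x y => x = y).
have Hphi : Defs.subrel rho (fun a b => c a = c b).
  apply: Mrho.
    split=> //; split; first by move=> ? ? ->.
    split; first by move=> ? ? ? -> ->.
    move=> o a b H; rewrite !hc; congr op; exact: functional_extensionality.
  move=> s Hs e /=; rewrite !eval_hom // !eval_setA.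
  apply: functional_extensionality => x; apply: propositional_extensionality.
  split=> -[y [Hy Hx]]; exists y; split=> //; exact/Hs.
have F : forall a b, rho a b -> T a b = a.
  move=> a b Hab.
  have [u Eu] := generation HA a.
  have [v Ev] := generation HA b.
  rewrite Eu Ev in Hab *.
  apply: (@absorb _ _ Hpl _ _ _ eta HA.1 u v) => x.
  have := Hphi _ _ Hab; rewrite !eval_hom // !eval_setA => /(congr1 (fun f => f x)) E.
  have E' : (exists y, occurs y u /\ c (eta y) x) <-> (exists y, occurs y v /\ c (eta y) x)
    by rewrite E.
  split=> H.
    have [y [Hy]] := E'.1 (ex_intro _ x (conj H (eq_ind_r (fun f => f x) erefl (ceta x)))).
    by rewrite ceta => <-.
  have [y [Hy]] := E'.2 (ex_intro _ x (conj H (eq_ind_r (fun f => f x) erefl (ceta x)))).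
  by rewrite ceta => <-.
have Tc : forall th, congruence th -> forall a b a' b', th a a' -> th b b' -> th (T a b) (T a' b').
  move=> th Hth a b a' b' H1 H2; apply: eval_cong => // -[|n] //.
have Tsw : forall a b, rho (T a b) (T b a).
  move=> a b.
  pose sw := fun n : nat => Var ar (if n is 0 then 1 else 0).
  have Hreg : regular (t, subst sw t).
    move=> x /=; rewrite occurs_subst; split.
      move=> Hx; have := (Ht.1 x Hx); case: x Hx => [|[|x]] Hx // _.
        exists 1; split=> //; exact: Ht.2.
      exists 0; split=> //; exact: Ht.2.
    move=> [y [Hy /= ->]]; apply: Ht.2; by case: y Hy.
  have := Srho _ Hreg (fun n => if n is 0 then a else b); rewrite /= eval_subst.
  congr rho; congr eval; apply: functional_extensionality => -[|n] //.
move=> x y; split.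
  move=> H; apply: H.
  - split.
      move=> a; exists a; split=> //; by exists a.
    split.
      move=> a b [z1 [H1 [z2 [H2 H3]]]]; exists z2; split; first exact: th_s.
      exists z1; split; [exact: rh_s | exact: th_s].
    split.
      move=> a b d [p [H1 [q [H2 H3]]]] [p' [H4 [q' [H5 H6]]]].
      have H34 := th_t _ _ _ H3 H4.
      exists (T p p'); split.
        apply: th_t H1 _; rewrite -{1}(F _ _ H2); exact: Tc.
      exists (T q' q); split.
        apply: (rh_t _ (T q q')); first exact: Tc.
        exact: Tsw.
      apply: th_t _ H6; rewrite -{2}(F _ _ (rh_s _ _ H5)); apply: Tc => //.
    move=> o a b Hab.
    have Hc := fun i => constructive_indefinite_description _ (Hab i).
    pose z1 := fun i => proj1_sig (Hc i).
    have Hz1 := fun i => proj2_sig (Hc i).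
    have Hc2 := fun i => constructive_indefinite_description _ (proj2 (Hz1 i)).
    exists (op (fun i => z1 i)); split.
      apply: th_c => i; exact: (proj1 (Hz1 i)).
    exists (op (fun i => proj1_sig (Hc2 i))); split.
      apply: rh_c => i; exact: (proj1 (proj2_sig (Hc2 i))).
    apply: th_c => i; exact: (proj2 (proj2_sig (Hc2 i))).
  - move=> a b H; exists b; split=> //; exists b; split=> //.
  - move=> a b H; exists a; split=> //; exists b; split=> //.
move=> [z1 [H1 [z2 [H2 H3]]]]; rewrite /cong_join => phi [_ [_ [pt _]]] Pth Prho.
exact: pt _ _ _ (Pth _ _ H1) (pt _ _ _ (Prho _ _ H2) (Pth _ _ H3)).
Qed.
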